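(* Let $A\in\mathbb{R}^{m\times n}$ have singular value decomposition $A=U\Sigma V^\top$ (with $U\in\mathbb{R}^{m\times m}$, $V\in\mathbb{R}^{n\times n}$ orthogonal), let $r=\operatorname{rank}(A)$, and let $\lambda:=(\sigma_1^2(A),\ldots,\sigma_r^2(A),0,\ldots,0)^\top\in\mathbb{R}^m$. Let $1\le s\le r$, let $\mathcal{S}\sim\operatorname{Vol}_s(AA^\top)$, and let $$H_s:=\frac{U\operatorname{diag}\big(e_{s-1}(\lambda_{-1}),\ldots,e_{s-1}(\lambda_{-m})\big)U^\top}{e_s(\lambda)}.$$ Then $$\mathbb{E}\big[I_{\mathcal{S}}^\top (A_{\mathcal{S}}^\dagger)^\top A_{\mathcal{S}}^\dagger I_{\mathcal{S}}\big]\preceq H_s.$$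
   Context: $\sigma_1(A)\ge\cdots\ge\sigma_r(A)>0$ are the nonzero singular values of $A$. For $\xi\in\mathbb{R}^p$ and $1\le \ell\le p$, $e_\ell(\xi):=\sum_{1\le i_1<\cdots<i_\ell\le p}\xi_{i_1}\cdots\xi_{i_\ell}$, and $e_0(\xi):=1$. For $i\in[m]$, $\lambda_{-i}\in\mathbb{R}^{m-1}$ is $\lambda$ with its $i$-th entry removed. For $\mathcal{S}\subseteq[m]$, $A_{\mathcal{S}}$ is the row submatrix of $A$ indexed by $\mathcal{S}$, $I_{\mathcal{S}}$ is the row submatrix of the $m\times m$ identity indexed by $\mathcal{S}$, and $\dagger$ denotes the Moore–Penrose pseudoinverse. $M\preceq N$ means $N-M$ is positive semidefinite. Volume sampling: $\mathcal{S}\sim\operatorname{Vol}_s(AA^\top)$ means $\mathcal{S}$ takes values in the $s$-element subsets of $[m]$ with $\mathbb{P}(\mathcal{S}=\mathcal{T})=\det(A_{\mathcal{T}}A_{\mathcal{T}}^\top)/\sum_{|\mathcal{J}|=s}\det(A_{\mathcal{J}}A_{\mathcal{J}}^\top)$. *)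

(* Defs.v *)
From HB Require Import structures.
From mathcomp Require Import all_boot all_order all_algebra.
From mathcomp Require Import boolp classical_sets reals.
Set Implicit Arguments. Unset Strict Implicit. Unset Printing Implicit Defensive.
Import Order.TTheory GRing.Theory Num.Theory.
Local Open Scope ring_scope.

Definition penrose (R : realType) (p q : nat) (A : 'M[R]_(p, q)) (X : 'M[R]_(q, p)) : Prop :=
  [/\ A *m X *m A = A, X *m A *m X = X, (A *m X)^T = A *m X & (X *m A)^T = X *m A].

(* The Moore-Penrose pseudoinverse A^dagger: the (unique, always existing)
   matrix satisfying the Penrose conditions. *)
Definition pinv (R : realType) (p q : nat) (A : 'M[R]_(p, q)) : 'M[R]_(q, p) :=
  xget 0 [set X | penrose A X].

(* Row submatrix A_S of A indexed by S (rows in increasing order). *)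
Definition rowsubset (R : realType) (m n : nat) (A : 'M[R]_(m, n)) (S : {set 'I_m})
  : 'M[R]_(#|S|, n) := \matrix_(i < #|S|, j < n) A (enum_val i) j.

Definition idsub (R : realType) (m : nat) (S : {set 'I_m}) : 'M[R]_(#|S|, m) :=
  rowsubset (1%:M : 'M[R]_m) S.

Definition elem_sym (R : realType) (p l : nat) (xi : 'I_p -> R) : R :=
  \sum_(S : {set 'I_p} | #|S| == l) \prod_(i in S) xi i.

Definition remove_entry (R : realType) (m : nat) (lam : 'I_m -> R) (i : 'I_m)
  : 'I_m.-1 -> R := fun j => lam (lift i j).

Definition volP (R : realType) (m n : nat) (A : 'M[R]_(m, n)) (s : nat) (T : {set 'I_m}) : R :=
  \det (rowsubset A T *m (rowsubset A T)^T) /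
  \sum_(J : {set 'I_m} | #|J| == s) \det (rowsubset A J *m (rowsubset A J)^T).

Definition vol_expect (R : realType) (m n : nat) (A : 'M[R]_(m, n)) (s : nat)
  (f : {set 'I_m} -> 'M[R]_m) : 'M[R]_m :=
  \sum_(T : {set 'I_m} | #|T| == s) volP A s T *: f T.

Definition psd (R : realType) (m : nat) (M : 'M[R]_m) : Prop :=
  M^T = M /\ forall x : 'cV[R]_m, 0 <= (x^T *m M *m x) 0 0.

Definition loewner_le (R : realType) (m : nat) (M N : 'M[R]_m) : Prop := psd (N - M).

(* Main.v *)
Require Import Defs.
From HB Require Import structures.
From mathcomp Require Import all_boot all_order all_algebra.
From mathcomp Require Import boolp classical_sets reals.
From mathcomp Require Import all_fingroup.
From mathcomp Require Import zify.
Import Order.TTheory GRing.Theory Num.Theory.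
Local Open Scope ring_scope.

Section Helpers.
Set Implicit Arguments. Unset Strict Implicit. Unset Printing Implicit Defensive.

Lemma sylvester (R : comNzRingType) (p q : nat) (A : 'M[R]_(p, q)) (B : 'M[R]_(q, p)) :
  \det (1%:M + A *m B) = \det (1%:M + B *m A).
Proof.
have e1 : block_mx 1%:M (-A) B 1%:M =
   block_mx 1%:M 0 B 1%:M *m block_mx 1%:M (-A) 0 (1%:M + B *m A).
  rewrite mulmx_block ?mul1mx ?mul0mx ?mulmx0 ?mulmx1 ?addr0 ?add0r.
  by rewrite mulmxN addrCA addNr addr0.
have e2 : block_mx 1%:M (-A) B 1%:M =
   block_mx (1%:M + A *m B) (-A) 0 1%:M *m block_mx 1%:M 0 B 1%:M.
  rewrite mulmx_block ?mul1mx ?mul0mx ?mulmx0 ?mulmx1 ?addr0 ?add0r.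
  by rewrite mulNmx addrK.
have := congr1 determinant e1; rewrite e2 !det_mulmx !det_lblock !det_ublock.
by rewrite !det1 !mul1r !mulr1.
Qed.

Lemma det_rank1_idom (R : idomainType) k (M : 'M[R]_k) (v : 'cV[R]_k) (w : 'rV[R]_k) :
  \det M != 0 -> \det (M + v *m w) = \det M + (w *m \adj M *m v) 0 0.
Proof.
move=> dM.
pose P := block_mx M v (-w) (1%:M : 'M_1).
have eP : P = block_mx (M + v *m w) v 0 1%:M *m block_mx 1%:M 0 (-w) 1%:M.
  rewrite mulmx_block ?mul1mx ?mul0mx ?mulmx0 ?mulmx1 ?addr0 ?add0r.
  by rewrite mulmxN addrK.
pose L := block_mx (1%:M : 'M_k) 0 (w *m \adj M) ((\det M)%:M : 'M_1).
have eL : L *m P = block_mx M v 0 (w *m \adj M *m v + (\det M)%:M).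
  rewrite mulmx_block ?mul1mx ?mul0mx ?addr0 ?mulmx1.
  by rewrite -mulmxA mul_adj_mx mul_mx_scalar mul_scalar_mx scalerN addrN.
have := congr1 determinant eL.
rewrite det_mulmx det_lblock det_ublock det1 mul1r det_scalar1.
rewrite eP det_mulmx det_ublock det_lblock !det1 !mulr1 det_mx11 !mxE eqxx mulr1n.
move/(mulfI dM) => ->; by rewrite addrC.
Qed.

Lemma det_rank1 (R : idomainType) k (M : 'M[R]_k) (v : 'cV[R]_k) (w : 'rV[R]_k) :
  \det (M + v *m w) = \det M + (w *m \adj M *m v) 0 0.
Proof.
pose Mp : 'M[{poly R}]_k := map_mx polyC M + 'X%:M.
have eMp : Mp = char_poly_mx (- M) by rewrite /char_poly_mx map_mxN opprK addrC.
have dMp : \det Mp != 0 by rewrite eMp monic_neq0 // char_poly_monic.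
have := det_rank1_idom (map_mx polyC v) (map_mx polyC w) dMp.
move/(congr1 (horner_eval 0)).
have ef : map_mx (horner_eval 0) Mp = M.
  by apply/matrixP => i j; rewrite !mxE /horner_eval hornerD hornerC hornerMn hornerX mul0rn addr0.
have ev : forall p q (N : 'M[R]_(p, q)), map_mx (horner_eval 0) (map_mx polyC N) = N.
  by move=> p q N; apply/matrixP => i j; rewrite !mxE /horner_eval hornerC.
rewrite rmorphD /= -!det_map_mx map_mxD map_mxM ef !ev.
have h0 : forall X : 'M[{poly R}]_1, horner_eval 0 (X 0 0) = (map_mx (horner_eval 0) X) 0 0.
  by move=> X; rewrite mxE.
by rewrite h0 !map_mxM map_mx_adj ef !ev.
Qed.

Definition mask (R : nzRingType) n (S : {set 'I_n}) (M : 'M[R]_n) : 'M[R]_n :=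
  \matrix_(i, j) if i \in S then M i j else (i == j)%:R.

Lemma det_add_diag (R : comNzRingType) n (M : 'M[R]_n) (d : 'rV[R]_n) :
  \det (M + diag_mx d) =
  \sum_(S : {set 'I_n}) (\prod_(i in ~: S) d 0 i) * \det (mask S M).
Proof.
rewrite /determinant.
have E (s : 'S_n) : \prod_i (M + diag_mx d) i (s i) =
    \prod_i (M i (s i) + d 0 i * (i == s i)%:R).
  by apply: eq_bigr => i _; rewrite !mxE mulr_natr.
under eq_bigr => s _ do rewrite E.
under eq_bigr => s _ do rewrite bigA_distr mulr_sumr.
rewrite exchange_big /=; apply: eq_bigr => S _.
rewrite mulr_sumr; apply: eq_bigr => s _.
rewrite mulrCA; congr (_ * _).
rewrite (eq_bigr (fun i => (if i \in S then 1 else d 0 i) * mask S M i (s i))); last first.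
  by move=> i _; rewrite mxE; case: (i \in S); rewrite ?mul1r.
rewrite big_split /=; congr (_ * _).
by rewrite [RHS]big_mkcond; apply: eq_bigr => i _; rewrite finset.in_setC; case: (i \in S).
Qed.

Definition Isub (R : nzRingType) m (S : {set 'I_m}) : 'M[R]_(#|S|, m) :=
  \matrix_(i, j) ((enum_val i) == j)%:R.
Arguments Isub {R m} S.

Lemma sum_delta (R : nzRingType) n (a : 'I_n) (F : 'I_n -> R) :
  \sum_k (a == k)%:R * F k = F a.
Proof.
rewrite (bigD1 a) //= eqxx mul1r big1 ?addr0 // => k.
by rewrite eq_sym => /negbTE ->; rewrite mul0r.
Qed.

Lemma Isub_mul (R : nzRingType) m p (S : {set 'I_m}) (X : 'M[R]_(m, p)) i j :
  (Isub S *m X) i j = X (enum_val i) j.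
Proof. by rewrite mxE (eq_bigr (fun k => ((enum_val i) == k)%:R * X k j)) ?sum_delta // => k _; rewrite mxE. Qed.

Lemma Isub_mulT (R : nzRingType) m (S : {set 'I_m}) :
  Isub S *m (Isub S)^T = 1%:M :> 'M[R]_#|S|.
Proof.
apply/matrixP => i j; rewrite Isub_mul !mxE (inj_eq enum_val_inj).
by rewrite eq_sym.
Qed.

Lemma IsubT_mul (R : nzRingType) m (S : {set 'I_m}) i j :
  ((Isub S)^T *m Isub S) i j = ((i \in S) && (i == j))%:R :> R.
Proof.
rewrite mxE.
rewrite (eq_bigr (fun l => ((enum_val l == i)%:R * (enum_val l == j)%:R : R))); last first.
  by move=> l _; rewrite !mxE.
rewrite -(big_enum_val (fun x => ((x == i)%:R * (x == j)%:R : R))) /=.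
rewrite big_mkcond (bigD1 i) //= eqxx mul1r big1 ?addr0.
  by case: (i \in S); rewrite ?mul0r.
by move=> k /negbTE ->; rewrite mul0r if_same.
Qed.

Lemma mask_Isub (R : comNzRingType) m (S : {set 'I_m}) (M : 'M[R]_m) :
  mask S M = 1%:M + (Isub S)^T *m (Isub S *m (M - 1%:M)).
Proof.
apply/matrixP => i j; rewrite (mulmxA (Isub S)^T) !mxE.
rewrite (eq_bigr (fun k => ((i \in S) && (i == k))%:R * (M - 1%:M) k j)); last first.
  by move=> k _; rewrite IsubT_mul.
case iS: (i \in S) => /=.
  by rewrite sum_delta !mxE addrC subrK.
by rewrite big1 ?addr0 // => k _; rewrite mul0r.
Qed.

Lemma det_mask (R : comNzRingType) m (S : {set 'I_m}) (M : 'M[R]_m) :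
  \det (mask S M) = \det (Isub S *m M *m (Isub S)^T).
Proof.
rewrite mask_Isub sylvester mulmxBr mulmx1 mulmxBl Isub_mulT.
by rewrite addrC subrK.
Qed.

Definition Fs (R : nzRingType) n (s : nat) (M : 'M[R]_n) : R :=
  \sum_(S : {set 'I_n} | #|S| == s) \det (mask S M).

Lemma char_expand (R : comNzRingType) n (M : 'M[R]_n) :
  \det (map_mx polyC M + diag_mx (\row_(i < n) 'X)) =
  \sum_(S : {set 'I_n}) 'X^(n - #|S|) * (\det (mask S M))%:P.
Proof.
rewrite det_add_diag; apply: eq_bigr => S _.
have -> : mask S (map_mx polyC M) = map_mx polyC (mask S M).
  by apply/matrixP => i j; rewrite !mxE; case: (i \in S) => //; rewrite rmorph_nat.
rewrite det_map_mx; congr (_ * _).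
rewrite (eq_bigr (fun _ => 'X)) ?prodr_const; last by move=> i _; rewrite mxE.
have -> : (n - #|S| = #|~: S|)%N by move: (cardsC S); rewrite card_ord; lia.
by [].
Qed.

Lemma Fs_coef (R : comNzRingType) n (s : nat) (M : 'M[R]_n) : (s <= n)%N ->
  Fs s M = (\det (map_mx polyC M + diag_mx (\row_(i < n) 'X)))`_(n - s).
Proof.
move=> sn; rewrite char_expand coef_sum /Fs [RHS](bigID (fun S : {set 'I_n} => #|S| == s)) /=.
rewrite [X in _ = _ + X]big1 ?addr0.
  apply: eq_bigr => S /eqP cS; rewrite mulrC coefCM coefXn cS eqxx mulr1 //.
move=> S cS; rewrite mulrC coefCM coefXn.
have -> : (n - s == n - #|S|)%N = false.
  apply/negbTE; apply: contra cS => /eqP e; apply/eqP.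
  have : (#|S| <= n)%N by move: (max_card (mem S)); rewrite card_ord.
  by move=> hS; rewrite -(subKn sn) e subKn.
by rewrite mulr0.
Qed.

Lemma Fs_conj (R : comNzRingType) n s (U M : 'M[R]_n) :
  U *m U^T = 1%:M -> (s <= n)%N -> Fs s (U *m M *m U^T) = Fs s M.
Proof.
move=> hU sn; rewrite !Fs_coef //; congr (_`_ _).
have eD : diag_mx (\row_(i < n) 'X) = ('X%:M : 'M[{poly R}]_n).
  by apply/matrixP => i j; rewrite !mxE.
set Up := map_mx polyC U.
have hUp : Up *m Up^T = 1%:M by rewrite /Up map_trmx -map_mxM hU map_mx1.
have -> : map_mx polyC (U *m M *m U^T) + diag_mx (\row_(i < n) 'X) =
          Up *m (map_mx polyC M + diag_mx (\row_(i < n) 'X)) *m Up^T.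
  rewrite !map_mxM -map_trmx eD mulmxDr mulmxDl; congr (_ + _).
  by rewrite mul_mx_scalar -scalemxAl hUp scalemx1.
by rewrite !det_mulmx mulrAC -det_mulmx hUp det1 mul1r.
Qed.

Lemma gram_det_ge0 (R : realFieldType) k p (C : 'M[R]_(k, p)) : 0 <= \det (C *m C^T).
Proof.
elim: k C => [|k IH] C; first by rewrite det_mx00.
pose C1 : 'M[R]_(1 + k, p) := C.
set c := usubmx C1; set C' := dsubmx C1.
have eC : C1 = col_mx c C' by rewrite vsubmxK.
change (0 <= \det (C1 *m C1^T)); rewrite eC tr_col_mx mul_col_row.
set a := (c *m c^T) 0 0.
have cc : c *m c^T = a%:M by rewrite {1}[c *m c^T]mx11_scalar.
have a_ge0 : 0 <= a by rewrite /a mxE sumr_ge0 // => j _; rewrite [c^T _ _]mxE -expr2 sqr_ge0.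
have [a0|an0] := eqVneq a 0.
  have c0 : c = 0.
    apply/matrixP => i j; rewrite (ord1 i) [RHS]mxE.
    move: a0; rewrite /a mxE => /eqP; rewrite psumr_eq0; last first.
      by move=> l _; rewrite [c^T _ _]mxE -expr2 sqr_ge0.
    by move/allP/(_ j (mem_index_enum _)); rewrite [c^T _ _]mxE -expr2 sqrf_eq0 => /eqP.
  by rewrite c0 !mul0mx trmx0 mulmx0 det_ublock det_mx11 mxE mul0r.
have a_gt0 : 0 < a by rewrite lt_def an0.
set x := a^-1.
set Q := c^T *m c.
have QQ : Q *m Q = a *: Q.
  by rewrite /Q mulmxA -(mulmxA c^T) cc mul_mx_scalar -scalemxAl.
set P := 1%:M - x *: Q.
have PT : P^T = P by rewrite /P linearB linearZ /= trmx1 /Q trmx_mul trmxK.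
have PP : P *m P = P.
  rewrite {1}/P mulmxBl mul1mx -scalemxAl {1}/P mulmxBr mulmx1 -scalemxAr QQ.
  by rewrite scalerA mulVf // scale1r subrr scaler0 subr0.
have eB : block_mx (c *m c^T) (c *m C'^T) (C' *m c^T) (C' *m C'^T) =
  block_mx 1%:M 0 (x *: (C' *m c^T)) 1%:M *m
  block_mx (c *m c^T) (c *m C'^T) 0 ((C' *m P) *m (C' *m P)^T).
  rewrite mulmx_block ?mul1mx ?mul0mx ?addr0 ?mulmx0 ?add0r ?mul1mx.
  congr block_mx.
    by rewrite cc mul_mx_scalar scalerA mulfV // scale1r.
  rewrite trmx_mul PT (mulmxA (C' *m P)) -(mulmxA C' P P) PP /P mulmxBr mulmx1 mulmxBl.
  rewrite -scalemxAr -!scalemxAl /Q !mulmxA.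
  by rewrite addrC subrK.
rewrite eB det_mulmx det_lblock det_ublock !det1 !mul1r cc det_scalar1.
by apply: mulr_ge0 => //; apply: IH.
Qed.

Lemma prod_lift_ne (R : comNzRingType) n (i : 'I_n) (F : 'I_n -> R) :
  \prod_(j | j != i) F j = \prod_(k < n.-1) F (lift i k).
Proof.
rewrite (reindex_omap (lift i) (unlift i)) /=; last first.
  by move=> j ji; case: unliftP ji => [k ->|->]; rewrite ?eqxx.
by apply: eq_bigl => k; rewrite liftK eqxx andbT eq_sym neq_lift.
Qed.

Lemma adj_diag (R : comNzRingType) n (d : 'rV[R]_n) :
  \adj (diag_mx d) = diag_mx (\row_i \prod_(j | j != i) d 0 j).
Proof.
apply/matrixP => i j; rewrite !mxE /cofactor.
case: (eqVneq i j) => [<-|ij].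
  rewrite -signr_odd addnn odd_double expr0 mul1r mulr1n prod_lift_ne.
  have -> : row' i (col' i (diag_mx d)) = diag_mx (\row_k d 0 (lift i k)).
    by apply/matrixP => a b; rewrite !mxE (inj_eq (@lift_inj _ i)).
  by rewrite det_diag; apply: eq_bigr => k _; rewrite mxE.
rewrite [RHS]/= mulr0n.
case: (unliftP j i) ij => [k ->|->]; last by rewrite eqxx.
move=> _; rewrite (expand_det_row _ k) big1 ?mulr0 // => l _.
by rewrite !mxE (negbTE (neq_lift _ _)) mulr0n mul0r.
Qed.


Lemma idsubE (R : realType) m (S : {set 'I_m}) : idsub R S = Isub S.
Proof. by apply/matrixP => i j; rewrite !mxE. Qed.

Lemma rowsubsetE (R : realType) m n (A : 'M[R]_(m, n)) (S : {set 'I_m}) :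
  rowsubset A S = Isub S *m A.
Proof. by apply/matrixP => i j; rewrite Isub_mul mxE. Qed.

Lemma pinv_full (R : realType) k p (A : 'M[R]_(k, p)) :
  A *m A^T \in unitmx -> (pinv A)^T *m pinv A = invmx (A *m A^T).
Proof.
move=> GU; set G := A *m A^T.
have GT : G^T = G by rewrite /G trmx_mul trmxK.
have ex : exists X, penrose A X.
  exists (A^T *m invmx G).
  have AX : A *m (A^T *m invmx G) = 1%:M by rewrite mulmxA mulmxV.
  split.
  - by rewrite AX mul1mx.
  - by rewrite -mulmxA AX mulmx1.
  - by rewrite AX trmx1.
  - by rewrite !trmx_mul trmxK trmx_inv GT mulmxA.
have := xgetPex 0 ex; rewrite -/(pinv A); set X := pinv A.
case => h1 h2 h3 h4.
have AX : A *m X = 1%:M.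
  have : A *m X *m G = G by rewrite /G mulmxA h1.
  by move/(congr1 (mulmx^~ (invmx G))) => /=; rewrite -(mulmxA (A *m X)) !mulmxV // mulmx1.
have XE : X = A^T *m (X^T *m X).
  by rewrite -{1}h2 -h4 trmx_mul mulmxA.
have : G *m (X^T *m X) = 1%:M by rewrite /G -mulmxA -XE.
by move/(congr1 (mulmx (invmx G))) => /=; rewrite (mulmxA (invmx G)) mulVmx // mul1mx mulmx1.
Qed.

Lemma elem_sym_remove (R : realType) m s (lam : 'I_m -> R) (i : 'I_m) : (1 <= s)%N ->
  \sum_(S : {set 'I_m} | (#|S| == s) && (i \in S)) \prod_(j in S :\ i) lam j =
  elem_sym s.-1 (remove_entry lam i).
Proof.
move=> s1.
have niT (T : {set 'I_m.-1}) : i \notin lift i @: T.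
  by apply/imsetP => -[k _ /eqP]; rewrite eq_sym lift_eqF.
have hK (T : {set 'I_m.-1}) : [set k | lift i k \in i |: (lift i @: T)] = T.
  by apply/setP => k; rewrite !inE lift_eqF /= mem_imset //; apply: lift_inj.
rewrite /elem_sym (reindex_onto (fun T : {set 'I_m.-1} => i |: (lift i @: T))
   (fun S => [set k | lift i k \in S])) /=; last first.
  move=> S /andP[_ iS]; apply/setP => x; rewrite !inE.
  case: (unliftP i x) => [k ->|->]; last by rewrite eqxx iS.
  by rewrite lift_eqF /= mem_imset ?inE //; apply: lift_inj.
apply: eq_big => [T|T _].
  rewrite hK eqxx andbT in_setU1 eqxx andbT cardsU1 niT card_imset; last exact: lift_inj.
  by case: s s1 => [|s'] //= _; rewrite add1n eqSS.
rewrite setU1K // big_imset /=; last by move=> a b _ _; apply: lift_inj.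
by [].
Qed.

Definition qf (R : comNzRingType) m (M : 'M[R]_m) (x : 'cV[R]_m) : R := (x^T *m M *m x) 0 0.

Lemma mxBE (R : comNzRingType) p q (M N : 'M[R]_(p, q)) i j : (M - N) i j = M i j - N i j.
Proof. by rewrite !mxE. Qed.

Lemma qfB (R : comNzRingType) m (M N : 'M[R]_m) x : qf (M - N) x = qf M x - qf N x.
Proof. by rewrite /qf mulmxBr mulmxBl mxBE. Qed.

Lemma qfZ (R : comNzRingType) m c (M : 'M[R]_m) x : qf (c *: M) x = c * qf M x.
Proof. by rewrite /qf -scalemxAr -scalemxAl mxE. Qed.

Lemma qf_sum (R : comNzRingType) m (I : finType) (P : pred I) (F : I -> 'M[R]_m) x :
  qf (\sum_(i | P i) F i) x = \sum_(i | P i) qf (F i) x.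
Proof. by rewrite /qf mulmx_sumr mulmx_suml summxE. Qed.

Lemma qf_conj (R : comNzRingType) m (U M : 'M[R]_m) x :
  qf (U *m M *m U^T) x = qf M (U^T *m x).
Proof. by rewrite /qf trmx_mul trmxK !mulmxA. Qed.

Lemma qf_diag (R : comNzRingType) m (d : 'rV[R]_m) x :
  qf (diag_mx d) x = \sum_i d 0 i * x i 0 ^+ 2.
Proof.
rewrite /qf mul_mx_diag mxE; apply: eq_bigr => i _.
by rewrite !mxE expr2 mulrA [x i 0 * _]mulrC.
Qed.

Lemma mask_diag (R : comNzRingType) m (S : {set 'I_m}) (d : 'rV[R]_m) :
  mask S (diag_mx d) = diag_mx (\row_i if i \in S then d 0 i else 1).
Proof. by apply/matrixP => i j; rewrite !mxE; case: (i \in S). Qed.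

Lemma Fs_diag (R : realType) m s (lam : 'I_m -> R) :
  Fs s (diag_mx (\row_i lam i)) = elem_sym s lam.
Proof.
rewrite /Fs /elem_sym; apply: eq_bigr => S _.
rewrite mask_diag det_diag [RHS]big_mkcond; apply: eq_bigr => i _.
by rewrite !mxE.
Qed.

Lemma Fs_rank1_diag (R : realType) m s (lam : 'I_m -> R) (y : 'cV[R]_m) : (1 <= s)%N ->
  Fs s (diag_mx (\row_i lam i) + y *m y^T) - Fs s (diag_mx (\row_i lam i)) =
  \sum_i elem_sym s.-1 (remove_entry lam i) * y i 0 ^+ 2.
Proof.
move=> s1; set D := diag_mx (\row_i lam i).
have step (S : {set 'I_m}) : \det (mask S (D + y *m y^T)) - \det (mask S D) =
    \sum_i (if i \in S then \prod_(j in S :\ i) lam j * y i 0 ^+ 2 else 0).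
  set v := \col_i (if i \in S then y i 0 else 0).
  have e1 : mask S (D + y *m y^T) = mask S D + v *m y^T.
    apply/matrixP => i j; rewrite !mxE !big_ord1 !mxE.
    by case: (i \in S); rewrite ?mul0r ?addr0.
  rewrite e1 det_rank1 addrAC subrr add0r /D mask_diag adj_diag mul_mx_diag mxE.
  apply: eq_bigr => i _; rewrite !mxE.
  case iS: (i \in S); last by rewrite mulr0.
  have -> : \prod_(j | j != i) (\row_i0 (if i0 \in S then (\row_i1 lam i1) 0 i0 else 1)) 0 j =
            \prod_(j in S :\ i) lam j.
    rewrite [RHS]big_mkcond [LHS]big_mkcond; apply: eq_bigr => j _.
    by rewrite !inE !mxE; case: (j == i); case: (j \in S).
  by rewrite expr2 -mulrA mulrCA.
rewrite /Fs -sumrB.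
rewrite (eq_bigr _ (fun S _ => step S)) exchange_big /=.
apply: eq_bigr => i _.
rewrite -big_mkcondr /= -elem_sym_remove // mulr_suml.
by apply: eq_bigr => S _.
Qed.

End Helpers.
Arguments Isub {R m} S.

Theorem lemma2p2 (R : realType) (m n : nat) (A : 'M[R]_(m, n))
  (U : 'M[R]_m) (Sig : 'M[R]_(m, n)) (V : 'M[R]_n)
  (hU : U^T *m U = 1%:M /\ U *m U^T = 1%:M)
  (hV : V^T *m V = 1%:M /\ V *m V^T = 1%:M)
  (hSdiag : forall (i : 'I_m) (j : 'I_n), val i != val j -> Sig i j = 0)
  (hSnn : forall (i : 'I_m) (j : 'I_n), val i = val j -> 0 <= Sig i j)
  (hSdec : forall (i1 i2 : 'I_m) (j1 j2 : 'I_n), val i1 = val j1 -> val i2 = val j2 ->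
             (val i1 <= val i2)%N -> Sig i2 j2 <= Sig i1 j1)
  (hA : A = U *m Sig *m V^T)
  (s : nat) (hs1 : (1 <= s)%N) (hsr : (s <= \rank A)%N) :
  let lam : 'I_m -> R := fun i => (Sig *m Sig^T) i i in
  let Hs : 'M[R]_m :=
    (elem_sym s lam)^-1 *:
      (U *m diag_mx (\row_(i < m) elem_sym s.-1 (remove_entry lam i)) *m U^T) in
  loewner_le
    (vol_expect A s (fun S =>
       (idsub R S)^T *m (pinv (rowsubset A S))^T *m pinv (rowsubset A S) *m idsub R S))
    Hs.
Proof.
move=> lam Hs.
set B := A *m A^T.
have sm : (s <= m)%N by apply: leq_trans hsr (rank_leq_row A).
set D := diag_mx (\row_i lam i).
have hD : Sig *m Sig^T = D.
  apply/matrixP => i k; rewrite /D [RHS]mxE [(\row_i0 lam i0) 0 i]mxE.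
  case: (eqVneq i k) => [<-|ik]; first by rewrite mulr1n.
  rewrite mulr0n mxE big1 // => j _; rewrite mxE.
  case: (eqVneq (val i) (val j)) => h; last by rewrite (hSdiag i j) // mul0r.
  rewrite (hSdiag k j) ?mulr0 //; apply: contra ik => /eqP hk.
  by apply/eqP/val_inj; rewrite /= h hk.
have hB : B = U *m D *m U^T.
  by rewrite /B hA !trmx_mul trmxK -hD !mulmxA -(mulmxA (U *m Sig) V^T V) hV.1 mulmx1.
have UUT : U *m U^T = 1%:M := hU.2.
have GE T : rowsubset A T *m (rowsubset A T)^T = Isub T *m B *m (Isub T)^T.
  by rewrite rowsubsetE trmx_mul !mulmxA.
have Zeq : \sum_(J : {set 'I_m} | #|J| == s) \det (rowsubset A J *m (rowsubset A J)^T)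
    = elem_sym s lam.
  rewrite (eq_bigr (fun J => \det (mask J B))); last by move=> J _; rewrite GE det_mask.
  by change (Fs s B = elem_sym s lam); rewrite hB Fs_conj // Fs_diag.
have lam_ge0 i : 0 <= lam i.
  by rewrite /lam mxE sumr_ge0 // => j _; rewrite [Sig^T _ _]mxE -expr2 sqr_ge0.
have es_ge0 : 0 <= elem_sym s lam.
  by rewrite /elem_sym sumr_ge0 // => S _; rewrite prodr_ge0.
split.
  rewrite linearB /=; congr (_ - _).
    by rewrite /Hs linearZ /= !trmx_mul trmxK tr_diag_mx !mulmxA.
  rewrite /vol_expect linear_sum /=; apply: eq_bigr => T _.
  by rewrite linearZ /= !trmx_mul !trmxK !mulmxA.
move=> x.
change (0 <= qf (Hs - vol_expect A s (fun S =>
       (idsub R S)^T *m (pinv (rowsubset A S))^T *m pinv (rowsubset A S) *m idsub R S)) x).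
rewrite qfB.
set y := U^T *m x.
have qH : qf Hs x =
    (elem_sym s lam)^-1 * \sum_i elem_sym s.-1 (remove_entry lam i) * y i 0 ^+ 2.
  by rewrite /Hs qfZ qf_conj qf_diag; congr (_ * _); apply: eq_bigr => i _; rewrite mxE.
have qeq T : \det (rowsubset A T *m (rowsubset A T)^T +
       (Isub T *m x) *m (Isub T *m x)^T) - \det (rowsubset A T *m (rowsubset A T)^T) =
    qf (\adj (rowsubset A T *m (rowsubset A T)^T)) (Isub T *m x).
  by rewrite det_rank1 addrAC subrr add0r.
have perT T : \det (rowsubset A T *m (rowsubset A T)^T) *
    qf ((idsub R T)^T *m (pinv (rowsubset A T))^T *m pinv (rowsubset A T) *m idsub R T) x =
    if \det (rowsubset A T *m (rowsubset A T)^T) == 0 then 0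
    else qf (\adj (rowsubset A T *m (rowsubset A T)^T)) (Isub T *m x).
  have -> : qf ((idsub R T)^T *m (pinv (rowsubset A T))^T *m pinv (rowsubset A T) *m idsub R T) x
      = qf ((pinv (rowsubset A T))^T *m pinv (rowsubset A T)) (Isub T *m x).
    by rewrite /qf idsubE trmx_mul !mulmxA.
  case: eqP => [->|d0]; first by rewrite mul0r.
  have GU : rowsubset A T *m (rowsubset A T)^T \in unitmx.
    by rewrite unitmxE unitfE; apply/eqP.
  by rewrite pinv_full // /invmx GU qfZ mulrA mulfV ?mul1r //; apply/eqP.
have hBx : B + x *m x^T = U *m (D + y *m y^T) *m U^T.
  rewrite mulmxDr mulmxDl -hB; congr (_ + _).
  rewrite /y trmx_mul trmxK !mulmxA UUT mul1mx -(mulmxA (x *m x^T)) UUT mulmx1.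
  by [].
have Wq : \sum_i elem_sym s.-1 (remove_entry lam i) * y i 0 ^+ 2 =
    \sum_(T : {set 'I_m} | #|T| == s)
      qf (\adj (rowsubset A T *m (rowsubset A T)^T)) (Isub T *m x).
  have e1 : Fs s (B + x *m x^T) = Fs s (D + y *m y^T) by rewrite hBx Fs_conj.
  have e2 : Fs s B = Fs s D by rewrite hB Fs_conj.
  rewrite -Fs_rank1_diag // -/D -e1 -e2 /Fs -sumrB; apply: eq_bigr => T _.
  rewrite -qeq !det_mask -GE; congr (\det _ - _).
  by rewrite mulmxDr mulmxDl GE trmx_mul !mulmxA.
rewrite qH Wq /vol_expect qf_sum.
rewrite [X in _ - X](eq_bigr (fun T =>
   (if \det (rowsubset A T *m (rowsubset A T)^T) == 0 then 0
    else qf (\adj (rowsubset A T *m (rowsubset A T)^T)) (Isub T *m x)) *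
   (elem_sym s lam)^-1)); last first.
  by move=> T _; rewrite qfZ /volP Zeq mulrAC perT.
rewrite -mulr_suml mulrC -mulrBl -sumrB; apply: mulr_ge0; last by rewrite invr_ge0.
apply: sumr_ge0 => T _; case: eqP => d0; last by rewrite subrr.
rewrite subr0 -qeq d0 subr0.
have -> : rowsubset A T *m (rowsubset A T)^T + Isub T *m x *m (Isub T *m x)^T =
   row_mx (rowsubset A T) (Isub T *m x) *m (row_mx (rowsubset A T) (Isub T *m x))^T.
  by rewrite tr_row_mx mul_row_col.
exact: gram_det_ge0.
Qed.
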